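(* Let $p \ge 1$, $t \ge 0$ and $\mathbf a = [a_1\;a_2\;a_3\;a_4]^t \in \mathbb R^4$. Let $\mathbf K, \mathbf L$ be the linear maps on $\mathbb R^4$ given by $\mathbf K\mathbf y = [y_1\;\; 0.5(y_2+y_3)\;\; 0.5(y_2+y_3)\;\; y_4]^t$ and $\mathbf L\mathbf y = [0\;\; 0.5(y_2-y_3)\;\; 0.5(y_3-y_2)\;\; 0]^t$. For $\mathbf b\in\mathbb R^4$ let $\mathcal P_s(\mathbf b,t)$ denote the minimizer over $\mathbf z\in\mathbb R^4$ of $\frac12\|\mathbf z-\mathbf b\|_2^2 + t\|\mathbf z\|_{S(p)}$. Then the minimizer over $\mathbf z\in\mathbb R^4$ of $$L_s(\mathbf z,\mathbf a) = \tfrac12\|\mathbf z - \mathbf a\|_2^2 + t\|\mathbf K\mathbf z\|_{S(p)}$$ is $\bar{\mathcal P}_s(\mathbf a,t) = \mathbf L\mathbf a + \mathcal P_s(\mathbf K\mathbf a, t)$.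
   Context: For a vector $\mathbf y = [y_1\;y_2\;y_3\;y_4]^t\in\mathbb R^4$, $\|\mathbf y\|_{S(p)}$ denotes the Schatten $p$-norm (the $\ell_p$ norm of the singular values) of the $2\times2$ matrix $\begin{bmatrix} y_1 & y_2\\ y_3 & y_4\end{bmatrix}$. $\|\cdot\|_2$ is the Euclidean norm. *)

(* Defs.v *)
From Stdlib Require Import Reals.
Open Scope R_scope.

Record vec4 : Type := V4 { c1 : R; c2 : R; c3 : R; c4 : R }.

Definition vadd (u v : vec4) : vec4 :=
  V4 (c1 u + c1 v) (c2 u + c2 v) (c3 u + c3 v) (c4 u + c4 v).
Definition vsub (u v : vec4) : vec4 :=
  V4 (c1 u - c1 v) (c2 u - c2 v) (c3 u - c3 v) (c4 u - c4 v).

Definition norm2 (y : vec4) : R :=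
  sqrt (c1 y ^ 2 + c2 y ^ 2 + c3 y ^ 2 + c4 y ^ 2).

(* Real power x^p for x >= 0, with the convention 0^p = 0 (p > 0).
   (Stdlib's Rpower 0 p = exp (p * ln 0) = 1, hence the guard.) *)
Definition rpow (x p : R) : R := if Req_EM_T x 0 then 0 else Rpower x p.

(* Singular values of M = [[y1, y2], [y3, y4]]: square roots of the two
   eigenvalues of the symmetric matrix G = M^t M, obtained from the
   characteristic polynomial  X^2 - tr(G) X + det(G). *)
Definition gram11 (y : vec4) : R := c1 y * c1 y + c3 y * c3 y.
Definition gram12 (y : vec4) : R := c1 y * c2 y + c3 y * c4 y.
Definition gram22 (y : vec4) : R := c2 y * c2 y + c4 y * c4 y.
Definition gram_tr (y : vec4) : R := gram11 y + gram22 y.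
Definition gram_det (y : vec4) : R := gram11 y * gram22 y - gram12 y * gram12 y.

Definition eig_max (y : vec4) : R :=
  (gram_tr y + sqrt (gram_tr y ^ 2 - 4 * gram_det y)) / 2.
Definition eig_min (y : vec4) : R :=
  (gram_tr y - sqrt (gram_tr y ^ 2 - 4 * gram_det y)) / 2.

Definition sing_max (y : vec4) : R := sqrt (eig_max y).
Definition sing_min (y : vec4) : R := sqrt (eig_min y).

Definition schatten (p : R) (y : vec4) : R :=
  rpow (rpow (sing_max y) p + rpow (sing_min y) p) (/ p).

Definition Kmap (y : vec4) : vec4 :=
  V4 (c1 y) (0.5 * (c2 y + c3 y)) (0.5 * (c2 y + c3 y)) (c4 y).
Definition Lmap (y : vec4) : vec4 :=
  V4 0 (0.5 * (c2 y - c3 y)) (0.5 * (c3 y - c2 y)) 0.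

Definition prox_obj (p t : R) (b z : vec4) : R :=
  / 2 * norm2 (vsub z b) ^ 2 + t * schatten p z.

Definition Ls (p t : R) (z a : vec4) : R :=
  / 2 * norm2 (vsub z a) ^ 2 + t * schatten p (Kmap z).

Definition is_minimizer (f : vec4 -> R) (x : vec4) : Prop :=
  forall z, f x <= f z.

(* Main.v *)
Require Import Defs.
From Stdlib Require Import Reals.
Open Scope R_scope.
From Stdlib Require Import Lra Psatz.
Require Import Defs.


Lemma rpow_0 q : rpow 0 q = 0.
Proof. unfold rpow; destruct (Req_EM_T 0 0); [reflexivity|congruence]. Qed.

Lemma rpow_pos x q : 0 < x -> rpow x q = Rpower x q.
Proof. intros H; unfold rpow; destruct (Req_EM_T x 0); [lra|reflexivity]. Qed.

Lemma Rpower_gt0 x q : 0 < Rpower x q.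
Proof. unfold Rpower; apply exp_pos. Qed.

Lemma rpow_ge0 x q : 0 <= rpow x q.
Proof. unfold rpow; destruct (Req_EM_T x 0); [lra|left; apply Rpower_gt0]. Qed.

Lemma rpow_gt0 x q : 0 < x -> 0 < rpow x q.
Proof. intros H; rewrite rpow_pos; auto; apply Rpower_gt0. Qed.

Lemma rpow_eq0 x q : 0 <= x -> rpow x q = 0 -> x = 0.
Proof. intros H H1. destruct (Req_EM_T x 0); auto.
  assert (0 < rpow x q) by (apply rpow_gt0; lra). lra. Qed.

Lemma rpow_mul x y q : 0 <= x -> 0 <= y -> rpow (x*y) q = rpow x q * rpow y q.
Proof. intros Hx Hy.
  destruct (Req_EM_T x 0) as [->|nx]. { rewrite Rmult_0_l, !rpow_0; ring. }
  destruct (Req_EM_T y 0) as [->|ny]. { rewrite Rmult_0_r, !rpow_0; ring. }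
  rewrite !rpow_pos; try lra; [|apply Rmult_lt_0_compat; lra].
  rewrite Rpower_mult_distr; auto; lra. Qed.

Lemma rpow_1 q : rpow 1 q = 1.
Proof. rewrite rpow_pos by lra. unfold Rpower. rewrite ln_1, Rmult_0_r, exp_0; auto. Qed.

Lemma rpow_rpow x a b : 0 <= x -> a * b = 1 -> rpow (rpow x a) b = x.
Proof. intros Hx Hab. destruct (Req_EM_T x 0) as [->|nx]. { rewrite !rpow_0; auto. }
  rewrite (rpow_pos x) by lra. rewrite rpow_pos by apply Rpower_gt0.
  rewrite Rpower_mult, Hab, Rpower_1; auto; lra. Qed.

Lemma rpow_le x y q : 0 < q -> 0 <= x <= y -> rpow x q <= rpow y q.
Proof. intros Hq [Hx Hxy]. destruct (Req_EM_T x 0) as [->|nx].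
  { rewrite rpow_0; apply rpow_ge0. }
  rewrite !rpow_pos by lra. apply Rle_Rpower_l; lra. Qed.

Lemma Rpower_split a p : 0 < a -> Rpower a (p-1) * a = Rpower a p.
Proof. intros Ha. rewrite <- (Rpower_1 a) at 2 by auto. rewrite <- Rpower_plus.
  f_equal; ring. Qed.

Lemma tangent p a b : 1 <= p -> 0 < a -> 0 <= b ->
  Rpower a p + p * Rpower a (p-1) * (b - a) <= rpow b p.
Proof. intros Hp Ha Hb.
  destruct (Req_EM_T b 0) as [->|nb].
  { rewrite rpow_0. pose proof (Rpower_split a p Ha). pose proof (Rpower_gt0 a p). nra. }
  rewrite rpow_pos by lra.
  destruct (Rtotal_order a b) as [Hlt|[Heq|Hgt]].
  - destruct (MVT_cor2 (fun x => Rpower x p) (fun x => p * Rpower x (p-1)) a b Hlt)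
      as [c [Hc1 Hc2]].
    { intros c Hc. apply derivable_pt_lim_power. lra. }
    assert (Rpower a (p-1) <= Rpower c (p-1)) by (apply Rle_Rpower_l; lra).
    cbv beta in Hc1.
    assert (0 <= (p*(b-a))*(Rpower c (p-1) - Rpower a (p-1))) by (apply Rmult_le_pos; nra).
    nra.
  - subst. lra.
  - destruct (MVT_cor2 (fun x => Rpower x p) (fun x => p * Rpower x (p-1)) b a Hgt)
      as [c [Hc1 Hc2]].
    { intros c Hc. apply derivable_pt_lim_power. lra. }
    assert (Rpower c (p-1) <= Rpower a (p-1)) by (apply Rle_Rpower_l; lra).
    cbv beta in Hc1.
    assert (0 <= (p*(a-b))*(Rpower a (p-1) - Rpower c (p-1))) by (apply Rmult_le_pos; nra).
    nra.
Qed.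

Lemma rpow_convex p l x y : 1 <= p -> 0 <= l <= 1 -> 0 <= x -> 0 <= y ->
  rpow (l*x + (1-l)*y) p <= l * rpow x p + (1-l) * rpow y p.
Proof. intros Hp Hl Hx Hy.
  assert (Hm : 0 <= l*x + (1-l)*y) by nra.
  destruct (Req_EM_T (l*x + (1-l)*y) 0) as [E|nm].
  { rewrite E, rpow_0. pose proof (rpow_ge0 x p). pose proof (rpow_ge0 y p). nra. }
  set (m := l*x + (1-l)*y) in *.
  pose proof (tangent p m x Hp ltac:(lra) Hx) as T1.
  pose proof (tangent p m y Hp ltac:(lra) Hy) as T2.
  rewrite rpow_pos by lra.
  set (M := Rpower m p) in *. set (D := p * Rpower m (p-1)) in *.
  assert (E : l * (M + D*(x-m)) + (1-l)*(M + D*(y-m)) = M) by (unfold m; ring).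
  nra.
Qed.

Definition Nn p a b := rpow (rpow (Rabs a) p + rpow (Rabs b) p) (/p).

Lemma Nn_ge0 p a b : 0 <= Nn p a b.
Proof. apply rpow_ge0. Qed.

Lemma Nn_pow p a b : 1 <= p -> rpow (Nn p a b) p = rpow (Rabs a) p + rpow (Rabs b) p.
Proof. intros Hp. unfold Nn. apply rpow_rpow.
  pose proof (rpow_ge0 (Rabs a) p); pose proof (rpow_ge0 (Rabs b) p); lra.
  field; lra. Qed.

Lemma Nn_homog p c a b : 1 <= p -> 0 <= c -> Nn p (c*a) (c*b) = c * Nn p a b.
Proof. intros Hp Hc. unfold Nn. rewrite !Rabs_mult, (Rabs_pos_eq c Hc).
  rewrite !rpow_mul by (auto using Rabs_pos).
  rewrite <- Rmult_plus_distr_l.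
  rewrite rpow_mul; [| apply rpow_ge0 |].
  - rewrite rpow_rpow; auto. field; lra.
  - pose proof (rpow_ge0 (Rabs a) p); pose proof (rpow_ge0 (Rabs b) p); lra.
Qed.

Lemma Nn_zero p a b : 1 <= p -> Nn p a b = 0 -> a = 0 /\ b = 0.
Proof. intros Hp H. unfold Nn in H. apply rpow_eq0 in H.
  2:{ pose proof (rpow_ge0 (Rabs a) p); pose proof (rpow_ge0 (Rabs b) p); lra. }
  pose proof (rpow_ge0 (Rabs a) p); pose proof (rpow_ge0 (Rabs b) p).
  assert (Ha : rpow (Rabs a) p = 0) by lra. assert (Hb : rpow (Rabs b) p = 0) by lra.
  apply rpow_eq0 in Ha; [|apply Rabs_pos]. apply rpow_eq0 in Hb; [|apply Rabs_pos].
  split; [destruct (Req_dec a 0)|destruct (Req_dec b 0)]; auto;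
  exfalso; [apply Rabs_no_R0 in H2|apply Rabs_no_R0 in H2]; auto.
Qed.

Lemma coord_bound p x1 x2 A B : 1 <= p -> 0 < A -> 0 < B ->
  rpow (Rabs (x1+x2)) p <= rpow (A+B) p *
   (A/(A+B) * (rpow (Rabs x1) p * rpow (/A) p) + (1 - A/(A+B)) * (rpow (Rabs x2) p * rpow (/B) p)).
Proof. intros Hp HA HB.
  assert (E : Rabs x1 + Rabs x2 = (A+B) * (A/(A+B) * (Rabs x1 * /A) + (1 - A/(A+B)) * (Rabs x2 * /B)))
    by (field; lra).
  pose proof (Rabs_pos x1); pose proof (Rabs_pos x2).
  assert (Hl : 0 <= A/(A+B) <= 1).
  { assert (A/(A+B) * (A+B) = A) by (field; lra).
    assert (0 < /(A+B)) by (apply Rinv_0_lt_compat; lra).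
    unfold Rdiv in *. split; nra. }
  apply Rle_trans with (rpow (Rabs x1 + Rabs x2) p).
  { apply rpow_le; [lra|]. split; [apply Rabs_pos|apply Rabs_triang]. }
  rewrite E, rpow_mul; [| lra |].
  2:{ assert (0 <= Rabs x1 * /A) by (apply Rmult_le_pos; auto; left; apply Rinv_0_lt_compat; lra).
      assert (0 <= Rabs x2 * /B) by (apply Rmult_le_pos; auto; left; apply Rinv_0_lt_compat; lra).
      nra. }
  apply Rmult_le_compat_l; [apply rpow_ge0|].
  rewrite <- !rpow_mul; auto; try (left; apply Rinv_0_lt_compat; lra).
  apply rpow_convex; auto;
  apply Rmult_le_pos; auto; left; apply Rinv_0_lt_compat; lra.
Qed.

Lemma minkowski p a1 b1 a2 b2 : 1 <= p ->
  Nn p (a1+a2) (b1+b2) <= Nn p a1 b1 + Nn p a2 b2.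
Proof. intros Hp.
  pose proof (Nn_ge0 p a1 b1) as HA0. pose proof (Nn_ge0 p a2 b2) as HB0.
  destruct (Req_EM_T (Nn p a1 b1) 0) as [HA|HA].
  { destruct (Nn_zero p a1 b1 Hp HA); subst. rewrite !Rplus_0_l. lra. }
  destruct (Req_EM_T (Nn p a2 b2) 0) as [HB|HB].
  { destruct (Nn_zero p a2 b2 Hp HB); subst. rewrite !Rplus_0_r. lra. }
  set (A := Nn p a1 b1) in *. set (B := Nn p a2 b2) in *.
  assert (PA : rpow A p = rpow (Rabs a1) p + rpow (Rabs b1) p) by (apply Nn_pow; auto).
  assert (PB : rpow B p = rpow (Rabs a2) p + rpow (Rabs b2) p) by (apply Nn_pow; auto).
  pose proof (coord_bound p a1 a2 A B Hp ltac:(lra) ltac:(lra)) as C1.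
  pose proof (coord_bound p b1 b2 A B Hp ltac:(lra) ltac:(lra)) as C2.
  assert (IA : rpow A p * rpow (/A) p = 1).
  { rewrite <- rpow_mul by (try lra; left; apply Rinv_0_lt_compat; lra).
    rewrite Rinv_r by lra. apply rpow_1. }
  assert (IB : rpow B p * rpow (/B) p = 1).
  { rewrite <- rpow_mul by (try lra; left; apply Rinv_0_lt_compat; lra).
    rewrite Rinv_r by lra. apply rpow_1. }
  assert (S : rpow (Rabs (a1+a2)) p + rpow (Rabs (b1+b2)) p <= rpow (A+B) p).
  { set (l := A/(A+B)) in *.
    set (iA := rpow (/A) p) in *. set (iB := rpow (/B) p) in *.
    set (S := rpow (A+B) p) in *.
    assert (E : S * (l * (rpow (Rabs a1) p * iA) + (1 - l) * (rpow (Rabs a2) p * iB)) +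
                S * (l * (rpow (Rabs b1) p * iA) + (1 - l) * (rpow (Rabs b2) p * iB))
              = S * (l * (rpow A p * iA) + (1-l) * (rpow B p * iB))) by (rewrite PA, PB; ring).
    rewrite IA, IB in E. lra. }
  unfold Nn at 1. rewrite <- (rpow_rpow (A+B) p (/p)) by (try lra; field; lra).
  apply rpow_le. apply Rinv_0_lt_compat; lra.
  split; auto. pose proof (rpow_ge0 (Rabs (a1+a2)) p); pose proof (rpow_ge0 (Rabs (b1+b2)) p); lra.
Qed.

Definition Fp p x y := Nn p ((x+y)/2) ((x-y)/2).

Lemma Fp_sym p x y : Fp p x y = Fp p y x.
Proof. unfold Fp, Nn. replace ((y-x)/2) with (-((x-y)/2)) by field.
  rewrite Rabs_Ropp, (Rplus_comm y x). reflexivity. Qed.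

Lemma Fp_neg p x y : Fp p (-x) y = Fp p x y.
Proof. unfold Fp, Nn. replace ((-x+y)/2) with (-((x-y)/2)) by field.
  replace ((-x-y)/2) with (-((x+y)/2)) by field.
  rewrite !Rabs_Ropp, Rplus_comm. reflexivity. Qed.

Lemma Fp_conv p l x1 y1 x2 y2 : 1 <= p -> 0 <= l <= 1 ->
  Fp p (l*x1 + (1-l)*x2) (l*y1 + (1-l)*y2) <= l * Fp p x1 y1 + (1-l) * Fp p x2 y2.
Proof. intros Hp Hl. unfold Fp.
  replace ((l*x1 + (1-l)*x2 + (l*y1 + (1-l)*y2))/2) with (l*((x1+y1)/2) + (1-l)*((x2+y2)/2)) by field.
  replace ((l*x1 + (1-l)*x2 - (l*y1 + (1-l)*y2))/2) with (l*((x1-y1)/2) + (1-l)*((x2-y2)/2)) by field.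
  eapply Rle_trans; [apply minkowski; auto|].
  rewrite !Nn_homog by (auto; lra). lra. Qed.

Lemma Fp_mono1 p x' x y : 1 <= p -> Rabs x' <= x -> Fp p x' y <= Fp p x y.
Proof. intros Hp H. pose proof (Rabs_pos x').
  destruct (Req_EM_T x 0) as [->|nx].
  { assert (x' = 0) by (destruct (Req_dec x' 0); auto; apply Rabs_no_R0 in H1; lra). subst; lra. }
  set (l := (x + x')/(2*x)).
  assert (Hl : 0 <= l <= 1).
  { unfold l. assert (0 < /(2*x)) by (apply Rinv_0_lt_compat; lra).
    assert ((x+x')/(2*x) * (2*x) = x + x') by (field; lra).
    pose proof (Rle_abs x'). pose proof (Rle_abs (-x')). rewrite Rabs_Ropp in H4.
    unfold Rdiv in *. split; nra. }
  replace x' with (l*x + (1-l)*(-x)) by (unfold l; field; lra).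
  replace y with (l*y + (1-l)*y) at 1 by ring.
  eapply Rle_trans; [apply Fp_conv; auto|]. rewrite Fp_neg. lra. Qed.

Lemma Fp_mono2 p x y' y : 1 <= p -> Rabs y' <= y -> Fp p x y' <= Fp p x y.
Proof. intros. rewrite (Fp_sym p x y'), (Fp_sym p x y). apply Fp_mono1; auto. Qed.

Definition Uv z := sqrt ((c1 z + c4 z)^2 + (c2 z - c3 z)^2).
Definition Vv z := sqrt ((c1 z - c4 z)^2 + (c2 z + c3 z)^2).

Lemma schatten_F p z : schatten p z = Fp p (Uv z) (Vv z).
Proof.
  assert (HU : Uv z * Uv z = (c1 z + c4 z)^2 + (c2 z - c3 z)^2) by (unfold Uv, Vv; apply sqrt_sqrt; apply Rplus_le_le_0_compat; apply pow2_ge_0).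
  assert (HV : Vv z * Vv z = (c1 z - c4 z)^2 + (c2 z + c3 z)^2) by (unfold Uv, Vv; apply sqrt_sqrt; apply Rplus_le_le_0_compat; apply pow2_ge_0).
  assert (HUV : sqrt (gram_tr z ^ 2 - 4 * gram_det z) = Uv z * Vv z).
  { unfold Uv, Vv. rewrite <- sqrt_mult by (apply Rplus_le_le_0_compat; apply pow2_ge_0). f_equal.
    unfold gram_tr, gram_det, gram11, gram12, gram22. ring. }
  assert (Htr : gram_tr z = (Uv z * Uv z + Vv z * Vv z)/2).
  { rewrite HU, HV. unfold gram_tr, gram11, gram22. field. }
  assert (Hmax : sing_max z = Rabs ((Uv z + Vv z)/2)).
  { unfold sing_max, eig_max. rewrite HUV, Htr, <- sqrt_Rsqr_abs. f_equal. unfold Rsqr. field. }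
  assert (Hmin : sing_min z = Rabs ((Uv z - Vv z)/2)).
  { unfold sing_min, eig_min. rewrite HUV, Htr, <- sqrt_Rsqr_abs. f_equal. unfold Rsqr. field. }
  unfold schatten, Fp, Nn. rewrite Hmax, Hmin. reflexivity.
Qed.

Lemma sqrt_tri_half a b c d :
  sqrt (((a+b)/2)^2 + ((c+d)/2)^2) <= (sqrt (a^2+c^2) + sqrt (b^2+d^2))/2.
Proof.
  pose proof (sqrt_cauchy a c b d). unfold Rsqr in H.
  pose proof (sqrt_pos (a^2+c^2)). pose proof (sqrt_pos (b^2+d^2)).
  pose proof (sqrt_sqrt (a^2+c^2) ltac:(nra)). pose proof (sqrt_sqrt (b^2+d^2) ltac:(nra)).
  replace (a*a+c*c) with (a^2+c^2) in H by ring. replace (b*b+d*d) with (b^2+d^2) in H by ring.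
  rewrite <- (sqrt_pow2 ((sqrt (a^2+c^2) + sqrt (b^2+d^2))/2)) by lra.
  apply sqrt_le_1_alt. nra.
Qed.

Lemma norm2_sq v : norm2 v ^ 2 = c1 v ^2 + c2 v ^2 + c3 v ^2 + c4 v ^2.
Proof. unfold norm2. apply pow2_sqrt. pose proof (pow2_ge_0 (c1 v)).
  pose proof (pow2_ge_0 (c2 v)). pose proof (pow2_ge_0 (c3 v)). pose proof (pow2_ge_0 (c4 v)). lra. Qed.

Lemma half : 0.5 = /2. Proof. lra. Qed.

Lemma Ls_decomp p t z a : Ls p t z a =
  prox_obj p t (Kmap a) (Kmap z) + ((c2 z - c3 z) - (c2 a - c3 a))^2/4.
Proof. unfold Ls, prox_obj. rewrite !norm2_sq. unfold Kmap at 2 3; simpl. rewrite half. field. Qed.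

Lemma prox_decomp p t b w : c2 b = c3 b ->
  prox_obj p t b w = prox_obj p t b (Kmap w) + (c2 w - c3 w)^2/4
     + t * (schatten p w - schatten p (Kmap w)).
Proof. intros Hb. unfold prox_obj. rewrite !norm2_sq. unfold Kmap at 1; simpl. rewrite half.
  rewrite <- Hb. field. Qed.

Lemma S_K p w : 1 <= p -> schatten p (Kmap w) <= schatten p w.
Proof. intros Hp. rewrite !schatten_F.
  assert (HV : Vv (Kmap w) = Vv w).
  { unfold Vv, Kmap; simpl. rewrite half. f_equal. field. }
  rewrite HV. apply Fp_mono1; auto.
  rewrite Rabs_pos_eq by apply sqrt_pos. unfold Uv, Kmap; simpl.
  apply sqrt_le_1_alt. rewrite half. pose proof (pow2_ge_0 (c2 w - c3 w)).
  replace (/2 * (c2 w + c3 w) - /2 * (c2 w + c3 w)) with 0 by ring. lra.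
Qed.

Definition mid (w w' : vec4) := V4 ((c1 w + c1 w')/2) ((c2 w + c2 w')/2) ((c3 w + c3 w')/2) ((c4 w + c4 w')/2).

Lemma S_mid p w w' : 1 <= p -> schatten p (mid w w') <= (schatten p w + schatten p w')/2.
Proof. intros Hp. rewrite !schatten_F.
  assert (HU : Uv (mid w w') <= (Uv w + Uv w')/2).
  { unfold Uv, mid; simpl.
    replace ((c1 w + c1 w')/2 + (c4 w + c4 w')/2) with (((c1 w + c4 w) + (c1 w' + c4 w'))/2) by field.
    replace ((c2 w + c2 w')/2 - (c3 w + c3 w')/2) with (((c2 w - c3 w) + (c2 w' - c3 w'))/2) by field.
    apply sqrt_tri_half. }
  assert (HV : Vv (mid w w') <= (Vv w + Vv w')/2).
  { unfold Vv, mid; simpl.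
    replace ((c1 w + c1 w')/2 - (c4 w + c4 w')/2) with (((c1 w - c4 w) + (c1 w' - c4 w'))/2) by field.
    replace ((c2 w + c2 w')/2 + (c3 w + c3 w')/2) with (((c2 w + c3 w) + (c2 w' + c3 w'))/2) by field.
    apply sqrt_tri_half. }
  eapply Rle_trans. { apply Fp_mono1; [auto| rewrite Rabs_pos_eq by apply sqrt_pos; exact HU]. }
  eapply Rle_trans. { apply Fp_mono2; [auto| rewrite Rabs_pos_eq by apply sqrt_pos; exact HV]. }
  replace ((Uv w + Uv w')/2) with (/2 * Uv w + (1 - /2) * Uv w') by field.
  replace ((Vv w + Vv w')/2) with (/2 * Vv w + (1 - /2) * Vv w') by field.
  eapply Rle_trans; [apply Fp_conv; auto; lra|]. lra.
Qed.

Lemma prox_mid p t b w w' : 1 <= p -> 0 <= t ->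
  prox_obj p t b (mid w w') <= (prox_obj p t b w + prox_obj p t b w')/2
    - ((c1 w - c1 w')^2 + (c2 w - c2 w')^2 + (c3 w - c3 w')^2 + (c4 w - c4 w')^2)/8.
Proof. intros Hp Ht. pose proof (S_mid p w w' Hp).
  unfold prox_obj. rewrite !norm2_sq. unfold mid at 1; simpl.
  assert (t * schatten p (mid w w') <= t * ((schatten p w + schatten p w')/2))
    by (apply Rmult_le_compat_l; auto).
  nra.
Qed.

Lemma sq0 x : x^2 = 0 -> x = 0.
Proof. intros H. destruct (Req_dec x 0); auto. exfalso; apply (pow_nonzero x 2); auto. Qed.

Lemma vec_eq u v : c1 u = c1 v -> c2 u = c2 v -> c3 u = c3 v -> c4 u = c4 v -> u = v.
Proof. destruct u, v; simpl; intros; subst; reflexivity. Qed.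

Theorem proposition3 (p t : R) (a : vec4) :
  1 <= p -> 0 <= t ->
  forall w : vec4,
    is_minimizer (prox_obj p t (Kmap a)) w ->
    is_minimizer (fun z => Ls p t z a) (vadd (Lmap a) w) /\
    (forall z, is_minimizer (fun z' => Ls p t z' a) z -> z = vadd (Lmap a) w).
Proof.
  intros Hp Ht w Hw.
  assert (Hb : c2 (Kmap a) = c3 (Kmap a)) by reflexivity.
  assert (Hsym : c2 w = c3 w).
  { pose proof (prox_decomp p t (Kmap a) w Hb). pose proof (Hw (Kmap w)).
    pose proof (S_K p w Hp).
    assert (0 <= t * (schatten p w - schatten p (Kmap w))) by (apply Rmult_le_pos; lra).
    assert (Hz2 : (c2 w - c3 w)^2 = 0) by (pose proof (pow2_ge_0 (c2 w - c3 w)); lra).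
    apply sq0 in Hz2. lra. }
  assert (HKw : Kmap w = w).
  { apply vec_eq; unfold Kmap; simpl; rewrite ?half; try reflexivity; rewrite Hsym; field. }
  set (z0 := vadd (Lmap a) w).
  assert (HKz0 : Kmap z0 = w).
  { apply vec_eq; unfold z0, Kmap, vadd, Lmap; simpl; rewrite ?half; try ring; rewrite Hsym; field. }
  assert (HLz0 : c2 z0 - c3 z0 = c2 a - c3 a).
  { unfold z0, vadd, Lmap; simpl. rewrite half, Hsym. field. }
  assert (Hval : Ls p t z0 a = prox_obj p t (Kmap a) w).
  { rewrite Ls_decomp, HKz0, HLz0. field. }
  split.
  - intros z. cbv beta. rewrite Hval, Ls_decomp.
    pose proof (Hw (Kmap z)). pose proof (pow2_ge_0 ((c2 z - c3 z) - (c2 a - c3 a))). lra.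
  - intros z Hz. pose proof (Hz z0) as H1. cbv beta in H1. rewrite Hval, Ls_decomp in H1.
    pose proof (Hw (Kmap z)) as H2. pose proof (pow2_ge_0 ((c2 z - c3 z) - (c2 a - c3 a))).
    assert (Hd : ((c2 z - c3 z) - (c2 a - c3 a))^2 = 0) by lra.
    assert (Hd' : c2 z - c3 z = c2 a - c3 a) by (apply sq0 in Hd; lra).
    assert (Heq : prox_obj p t (Kmap a) (Kmap z) = prox_obj p t (Kmap a) w) by lra.
    pose proof (prox_mid p t (Kmap a) w (Kmap z) Hp Ht) as M.
    pose proof (Hw (mid w (Kmap z))) as M2.
    set (k := Kmap z) in *.
    assert (Hs : (c1 w - c1 k)^2 + (c2 w - c2 k)^2 + (c3 w - c3 k)^2 + (c4 w - c4 k)^2 = 0).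
    { pose proof (pow2_ge_0 (c1 w - c1 k)). pose proof (pow2_ge_0 (c2 w - c2 k)).
      pose proof (pow2_ge_0 (c3 w - c3 k)). pose proof (pow2_ge_0 (c4 w - c4 k)). lra. }
    assert (E1 : c1 w = c1 k) by (apply Rminus_diag_uniq, sq0; pose proof (pow2_ge_0 (c1 w - c1 k)); pose proof (pow2_ge_0 (c2 w - c2 k));
      pose proof (pow2_ge_0 (c3 w - c3 k)); pose proof (pow2_ge_0 (c4 w - c4 k)); lra).
    assert (E2 : c2 w = c2 k) by (apply Rminus_diag_uniq, sq0; pose proof (pow2_ge_0 (c1 w - c1 k)); pose proof (pow2_ge_0 (c2 w - c2 k));
      pose proof (pow2_ge_0 (c3 w - c3 k)); pose proof (pow2_ge_0 (c4 w - c4 k)); lra).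
    assert (E3 : c3 w = c3 k) by (apply Rminus_diag_uniq, sq0; pose proof (pow2_ge_0 (c1 w - c1 k)); pose proof (pow2_ge_0 (c2 w - c2 k));
      pose proof (pow2_ge_0 (c3 w - c3 k)); pose proof (pow2_ge_0 (c4 w - c4 k)); lra).
    assert (E4 : c4 w = c4 k) by (apply Rminus_diag_uniq, sq0; pose proof (pow2_ge_0 (c1 w - c1 k)); pose proof (pow2_ge_0 (c2 w - c2 k));
      pose proof (pow2_ge_0 (c3 w - c3 k)); pose proof (pow2_ge_0 (c4 w - c4 k)); lra).
    unfold k, Kmap in E1, E2, E3, E4; simpl in E1, E2, E3, E4. rewrite half in E2, E3.
    apply vec_eq; unfold vadd, Lmap; simpl; rewrite ?half; lra.
Qed.
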